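(* Let $N=M\ell$ with $\ell$ prime, and let $\beta:=\beta_\ell(M)_*:\mathrm{Div}^0_{\mathrm{cusp}}(X_0(N))(\mathbf{Q})\to\mathrm{Div}^0_{\mathrm{cusp}}(X_0(M))(\mathbf{Q})$ be the push-forward along the degeneracy map. Then $$\mathrm{Div}^0_{\mathrm{cusp}}(X_0(M))(\mathbf{Q})\big/\beta\big(\mathrm{Div}^0_{\mathrm{cusp}}(X_0(N))(\mathbf{Q})\big)\simeq(\mathbf{Z}/\ell\mathbf{Z})^k$$ for some integer $k\ge0$. Moreover, if $\ell^4\nmid N$ then $k=0$, and consequently $\beta_\ell(M)_*(\mathscr{C}(N))=\mathscr{C}(M)$.
   Context: $\beta_\ell(M):X_0(M\ell)\to X_0(M)$ is the degeneracy map induced by $\tau\mapsto\ell\tau$ on the upper half-plane (modularly, $(E,C)\mapsto(E/C[\ell],C/C[\ell])$). $\mathrm{Div}^0_{\mathrm{cusp}}(X_0(N))(\mathbf{Q})$ denotes the group of degree-$0$ divisors on $X_0(N)$ supported on cusps and fixed by $\mathrm{Gal}(\overline{\mathbf{Q}}/\mathbf{Q})$. $\mathscr{C}(N)\subset J_0(N)$ is the group of linear equivalence classes of such divisors (the rational cuspidal divisor class group). *)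

(* Defs.v *)
From HB Require Import structures.
From mathcomp Require Import all_boot all_order all_algebra.
Unset Printing Implicit Defensive.
Import Order.TTheory GRing.Theory Num.Theory.
Local Open Scope ring_scope.

(* Cusps of X_0(N) (N >= 1), via the classical parametrisation:
   every cusp is Gamma_0(N)-equivalent to a/d with d a positive divisor of N,
   gcd(a,d)=1, and a/d ~ a'/d iff a = a' mod g(d), g(d) := gcd(d, N/d).
   A cusp is encoded as the pair (d, u) with u = a mod g(d) a unit mod g(d). *)
Definition gN (N d : nat) : nat := gcdn d (N %/ d).

Definition cusp_pred (N : nat) (x : 'I_N.+1 * 'I_N.+1) : bool :=
  let d := nat_of_ord x.1 in let u := nat_of_ord x.2 in
  [&& (0 < d)%N, (d %| N)%N, (u < gN N d)%N & coprime u (gN N d)].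

Definition cusp (N : nat) : finType := {x : 'I_N.+1 * 'I_N.+1 | cusp_pred N x}.

Definition cusp_d {N : nat} (c : cusp N) : nat := nat_of_ord (val c).1.
Definition cusp_u {N : nat} (c : cusp N) : nat := nat_of_ord (val c).2.

Definition cdiv (N : nat) := {ffun cusp N -> int}.

Definition cdeg {N : nat} (D : cdiv N) : int := \sum_(c : cusp N) D c.

(* Galois action: sigma_k (k a unit mod N, i.e. zeta_N -> zeta_N^k) sends the
   cusp a/d to ka/d.  A divisor is defined over Q iff it is fixed by all sigma_k. *)
Definition rational_div {N : nat} (D : cdiv N) : Prop :=
  forall (k : nat) (c c' : cusp N), coprime k N ->
    cusp_d c' = cusp_d c ->
    cusp_u c' = ((k * cusp_u c) %% gN N (cusp_d c))%N ->
    D c' = D c.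

Definition Div0Q {N : nat} (D : cdiv N) : Prop := cdeg D = 0 /\ rational_div D.

(* The degeneracy map beta_l(M) : X_0(M l) -> X_0(M), tau |-> l tau, on cusps:
   a/d (d | Ml, a chosen prime to l) |-> l a / d, which reduces to
   a/(d/l) if l | d and to (l a)/d otherwise. *)
Definition beta_d (l d : nat) : nat := (d %/ gcdn d l)%N.
Definition beta_u (M l d u : nat) : nat :=
  ((l %/ gcdn d l) * u %% gN M (beta_d l d))%N.

Definition degen_push (M l : nat) {N : nat} (D : cdiv N) : cdiv M :=
  [ffun y : cusp M => \sum_(x : cusp N | (beta_d l (cusp_d x) == cusp_d y)
                          && (beta_u M l (cusp_d x) (cusp_u x) == cusp_u y)) D x].

(* Main.v *)
Require Import Defs.
From HB Require Import structures.
From mathcomp Require Import all_boot all_order all_algebra.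
Import Order.TTheory GRing.Theory Num.Theory.
Local Open Scope ring_scope.

Lemma cusp_props L (c : cusp L) :
  [/\ (0 < cusp_d c)%N, (cusp_d c %| L)%N, (cusp_u c < gN L (cusp_d c))%N
    & coprime (cusp_u c) (gN L (cusp_d c))].
Proof. case: c => [[d u] H]; rewrite /cusp_d /cusp_u /=; by case/and4P: H. Qed.

Lemma gN_gt0 L d : (0 < d)%N -> (0 < gN L d)%N.
Proof. by move=> d0; rewrite /gN gcdn_gt0 d0. Qed.

Lemma gN_dvd L d : (gN L d %| d)%N.
Proof. exact: dvdn_gcdl. Qed.

Lemma cusp_ex L d u : (0 < L)%N -> (0 < d)%N -> (d %| L)%N -> (u < gN L d)%N ->
  coprime u (gN L d) -> exists c : cusp L, cusp_d c = d /\ cusp_u c = u.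
Proof.
move=> L0 d0 dL ug cu.
have dle : (d < L.+1)%N by rewrite ltnS dvdn_leq.
have ule : (u < L.+1)%N.
  by rewrite ltnS ltnW // (leq_trans ug) // (leq_trans (dvdn_leq d0 (gN_dvd L d))) // dvdn_leq.
have P : cusp_pred L (Ordinal dle, Ordinal ule) by rewrite /cusp_pred /= d0 dL ug cu.
by exists (exist (fun x => is_true (cusp_pred L x)) _ P).
Qed.

Lemma cusp_inj L (c c' : cusp L) : cusp_d c = cusp_d c' -> cusp_u c = cusp_u c' -> c = c'.
Proof.
case: c c' => [[d u] P] [[d' u'] P'] /= Hd Hu.
apply: val_inj => /=; congr pair; exact: val_inj.
Qed.
Lemma lift_unit L g u : (0 < L)%N -> (0 < g)%N -> coprime u g ->
  exists k, coprime k L /\ (k %% g = u %% g)%N.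
Proof.
move=> L0 g0 cu.
pose t := (\prod_(p <- primes L | ~~ (p %| u)) p)%N.
exists (u + g * t)%N; split; last by rewrite addnC mulnC modnMDl.
apply/negPn/negP => ncop.
have g1 : (1 < gcdn (u + g * t) L)%N.
  rewrite ltn_neqAle eq_sym ncop /=.
  by rewrite gcdn_gt0 L0 orbT.
pose q := pdiv (gcdn (u + g * t) L).
have qP : prime q by exact: pdiv_prime.
have qk : (q %| u + g * t)%N by rewrite (dvdn_trans (pdiv_dvd _)) // dvdn_gcdl.
have qL : (q %| L)%N by rewrite (dvdn_trans (pdiv_dvd _)) // dvdn_gcdr.
have qpr : q \in primes L by rewrite mem_primes qP L0.
have qt : (q %| t)%N = ~~ (q %| u)%N.
  rewrite /t Euclid_dvd_prod // big_has_cond.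
  apply/hasP/idP => [[p pin /andP[/= pu qp]]|qu].
    by move: qp; rewrite dvdn_prime2 //; [move/eqP->|move: pin; rewrite mem_primes => /and3P[]].
  by exists q => //=; rewrite qu dvdnn.
case qu: (q %| u)%N.
  have qg : ~~ (q %| g)%N.
    apply/negP => qg; have : (q %| gcdn u g)%N by rewrite dvdn_gcd qu qg.
    by rewrite (eqP cu) dvdn1 => /eqP q1; rewrite q1 in qP.
  move: qk; rewrite dvdn_addr // Euclid_dvdM // qt qu /= orbF.
  by apply/negP.
have : (q %| g * t)%N by rewrite dvdn_mull // qt qu.
by move=> qgt; move: qk; rewrite dvdn_addl // qu.
Qed.

Lemma canon_ex L d : (0 < L)%N -> (0 < d)%N -> (d %| L)%N ->
  exists c : cusp L, cusp_d c = d /\ cusp_u c = (1 %% gN L d)%N.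
Proof.
move=> L0 d0 dL; apply: cusp_ex => //; first by rewrite ltn_pmod // gN_gt0.
by rewrite coprime_modl coprime1n.
Qed.

Lemma rat_const L (D : cdiv L) : (0 < L)%N -> rational_div D ->
  forall c c' : cusp L, cusp_d c = cusp_d c' -> D c = D c'.
Proof.
move=> L0 RD.
have key : forall c c0 : cusp L, cusp_d c0 = cusp_d c ->
    cusp_u c0 = (1 %% gN L (cusp_d c))%N -> D c = D c0.
  move=> c c0 e0 u0.
  have [d0 _ uc cc] := cusp_props _ c.
  have [k [ck km]] := lift_unit _ _ _ L0 (gN_gt0 L _ d0) cc.
  apply: (RD k) => //; rewrite e0 u0 modnMmr muln1 km modn_small //.
move=> c c' e.
have [d0 dL _ _] := cusp_props _ c.
have [c0 [e0 u0]] := canon_ex _ _ L0 d0 dL.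
rewrite (key c c0) // (key c' c0) //; by rewrite -?e.
Qed.

Lemma card_fiber L d (P : pred nat) : (0 < L)%N -> (0 < d)%N -> (d %| L)%N ->
  (\sum_(c : cusp L | (cusp_d c == d) && P (cusp_u c)) 1)%N
  = count (fun u => coprime u (gN L d) && P u) (iota 0 (gN L d)).
Proof.
move=> L0 d0 dL.
rewrite sum1dep_card cardE -(size_map (@cusp_u L)) -size_filter.
apply: perm_size; apply: uniq_perm.
- rewrite map_inj_in_uniq ?enum_uniq //.
  move=> c c'; rewrite !mem_enum !inE => /andP[/eqP e _] /andP[/eqP e' _] eu.
  by apply: cusp_inj => //; rewrite e e'.
- by rewrite filter_uniq // iota_uniq.
move=> u; rewrite mem_filter mem_iota /= add0n.
apply/mapP/idP => [[c]|/andP[/andP[cu pu] ug]].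
  rewrite mem_enum !inE => /andP[/eqP e pc] ->.
  have [_ _ ug cc] := cusp_props _ c; rewrite -e.
  by rewrite cc ug pc.
have [c [e1 e2]] := cusp_ex _ _ _ L0 d0 dL ug cu.
by exists c => //; rewrite mem_enum !inE e1 eqxx e2.
Qed.

Lemma count_pred1_iota g u0 : (u0 < g)%N -> count (pred1 u0) (iota 0 g) = 1%N.
Proof. by move=> ug; rewrite count_uniq_mem ?iota_uniq // mem_iota ug. Qed.

Lemma count_mod n g u' : (u' < g)%N ->
  count (fun u => u %% g == u')%N (iota 0 (n * g)) = n.
Proof.
move=> ug; elim: n => [|n IH]; first by rewrite mul0n.
rewrite mulSnr iotaD count_cat IH add0n -[X in iota X _]addn0 iotaDl count_map.
rewrite -addn1; congr addn; rewrite -(count_pred1_iota _ _ ug).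
apply: eq_in_count => u; rewrite mem_iota /= add0n => ult.
by rewrite modnMDl modn_small.
Qed.

Lemma count_C1 l g u' : (0 < g)%N -> (0 < l)%N -> coprime l g -> (u' < g)%N -> coprime u' g ->
  count (fun u => coprime u g && (l * u %% g == u'))%N (iota 0 g) = 1%N.
Proof.
move=> g0 l0 clg ug cug.
case: (egcdnP g l0) => km kn E _.
rewrite (eqP clg) in E.
have inv : forall x, (km * (l * x) %% g = x %% g)%N.
  by move=> x; rewrite mulnA E mulnDl mul1n mulnAC modnMDl.
rewrite -(count_pred1_iota g ((km * u') %% g)%N) ?ltn_pmod //.
apply: eq_in_count => u; rewrite mem_iota /= add0n => ult.
apply/andP/eqP => [[_ /eqP <-]|->].
  by rewrite modnMmr inv modn_small.
have e1 : ((l * ((km * u') %% g)) %% g = u')%N.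
  by rewrite modnMmr mulnCA inv modn_small.
split; last by rewrite e1.
move: cug; rewrite -{1}e1 coprime_modl coprimeMl => /andP[_ H]; exact: H.
Qed.

Lemma count_C3 n g u' : (0 < g)%N -> (u' < g)%N -> coprime u' g ->
  (forall u, coprime u (n * g) = coprime u g) ->
  count (fun u => coprime u (n * g) && (u %% g == u'))%N (iota 0 (n * g)) = n.
Proof.
move=> g0 ug cug H.
transitivity (count (fun u => u %% g == u')%N (iota 0 (n * g))); last exact: count_mod.
apply: eq_in_count => u _ /=.
rewrite H; apply/andP/idP => [[]//|/eqP e]; split => //.
by rewrite -coprime_modl e.
by rewrite e.
Qed.

Lemma bd_nl l d : prime l -> ~~ (l %| d)%N -> beta_d l d = d.
Proof.
move=> lP nd; rewrite /beta_d.
have : coprime d l by rewrite coprime_sym prime_coprime.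
by move/eqP ->; rewrite divn1.
Qed.

Lemma bd_l l d : prime l -> (l %| d)%N -> beta_d l d = (d %/ l)%N.
Proof. by move=> lP ld; rewrite /beta_d (gcdn_idPr ld). Qed.

Lemma bu_nl M l d u : prime l -> ~~ (l %| d)%N -> beta_u M l d u = (l * u %% gN M d)%N.
Proof.
move=> lP nd; rewrite /beta_u bd_nl //.
have : coprime d l by rewrite coprime_sym prime_coprime.
by move/eqP ->; rewrite divn1.
Qed.

Lemma bu_l M l d u : prime l -> (l %| d)%N -> beta_u M l d u = (u %% gN M (d %/ l))%N.
Proof.
by move=> lP ld; rewrite /beta_u /beta_d (gcdn_idPr ld) divnn prime_gt0 // mul1n.
Qed.

Lemma push_split M l N (y : cdiv N) (c' : cusp M) : prime l ->
  degen_push M l y c' =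
  (if (l %| cusp_d c')%N then 0 else
     \sum_(x : cusp N | (cusp_d x == cusp_d c') &&
                        ((l * cusp_u x) %% gN M (cusp_d c') == cusp_u c')%N) y x)
  + \sum_(x : cusp N | (cusp_d x == l * cusp_d c')%N &&
                        ((cusp_u x) %% gN M (cusp_d c') == cusp_u c')%N) y x.
Proof.
move=> lP; rewrite ffunE.
set D := cusp_d c'; set U := cusp_u c'.
have -> : (if (l %| D)%N then 0 else
     \sum_(x : cusp N | (cusp_d x == D) &&
                        ((l * cusp_u x) %% gN M D == U)%N) y x)
   = \sum_(x : cusp N | ~~ (l %| D)%N && ((cusp_d x == D) &&
                        ((l * cusp_u x) %% gN M D == U)%N)) y x.
  by case: (l %| D)%N => //=; rewrite big_pred0.
rewrite big_mkcond [X in _ = X + _]big_mkcond [X in _ = _ + X]big_mkcond -big_split /=.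
apply: eq_bigr => x _.
have l1 : (1 < l)%N by exact: prime_gt1.
case: (boolP (l %| cusp_d x)%N) => ldx.
  rewrite bd_l // bu_l //.
  have e : ((cusp_d x %/ l)%N == D) = (cusp_d x == l * D)%N.
    apply/eqP/eqP => [<-|->]; first by rewrite mulnC divnK.
    by rewrite mulKn // ltnW.
  rewrite e.
  have D0 : (0 < D)%N by have [] := cusp_props _ c'.
  have hDl : (D == l * D)%N = false.
    by apply/negbTE; rewrite -{1}(mul1n D) eqn_mul2r negb_or -lt0n D0 /= eq_sym (gtn_eqF l1).
  case: (boolP (cusp_d x == D)) => [/eqP ed|_].
    by rewrite ed in ldx *; rewrite hDl ldx !andFb add0r.
  rewrite andbF add0r.
  case: eqP => [ed|_]; last by rewrite !andFb.
  by rewrite ed (mulKn _ (ltnW l1)).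
rewrite bd_nl // bu_nl //.
have -> : (cusp_d x == l * D)%N = false.
  by apply/eqP => e; move: ldx; rewrite e dvdn_mulr.
rewrite addr0.
case: eqP => [ed|_]; last by rewrite !andbF.
by rewrite ed in ldx *; rewrite ldx.
Qed.

Lemma G1 M l d : prime l -> (d %| M)%N -> ~~ (l %| d)%N -> gN (M * l) d = gN M d.
Proof.
move=> lP dM nd; rewrite /gN -divn_mulAC // Gauss_gcdl //.
by rewrite coprime_sym prime_coprime.
Qed.

Lemma NdivlD M l D : prime l -> (0 < D)%N -> ((M * l) %/ (l * D) = M %/ D)%N.
Proof. by move=> lP D0; rewrite mulnC divnMl // prime_gt0. Qed.

Lemma G2a l D K : prime l -> (l * gcdn D K %| K)%N -> gcdn (l * D) K = (l * gcdn D K)%N.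
Proof.
move=> lP h; apply/eqP; rewrite eqn_dvd; apply/andP; split.
  rewrite muln_gcdr dvdn_gcd dvdn_gcdl /=.
  by rewrite (dvdn_trans (dvdn_gcdr _ _)) // dvdn_mull.
by rewrite dvdn_gcd h andbT dvdn_pmul2l ?prime_gt0 // dvdn_gcdl.
Qed.

Lemma G2b l D K : prime l -> (0 < D)%N -> ~~ (l * gcdn D K %| K)%N -> gcdn (l * D) K = gcdn D K.
Proof.
move=> lP D0 h.
have g0 : (0 < gcdn D K)%N by rewrite gcdn_gt0 D0.
have gG : (gcdn D K %| gcdn (l * D) K)%N.
  by rewrite dvdn_gcd dvdn_gcdr andbT dvdn_mull // dvdn_gcdl.
have Gg : (gcdn (l * D) K %| l * gcdn D K)%N.
  rewrite muln_gcdr dvdn_gcd dvdn_gcdl /=.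
  by rewrite (dvdn_trans (dvdn_gcdr _ _)) // dvdn_mull.
have [q eq] : exists q, gcdn (l * D) K = (q * gcdn D K)%N.
  by exists (gcdn (l * D) K %/ gcdn D K)%N; rewrite divnK.
move: Gg; rewrite eq mulnC [X in (_ %| X)%N]mulnC dvdn_pmul2l //.
case/primeP: lP => _ /[apply] /orP[/eqP q1|/eqP q1]; first by rewrite q1 muln1.
by move: h; rewrite -q1 -eq dvdn_gcdr.
Qed.

Lemma Xval L (D : cdiv L) (c : cusp L) : (0 < L)%N -> rational_div D ->
  \sum_(c0 : cusp L | (cusp_d c0 == cusp_d c) && (cusp_u c0 == 1 %% gN L (cusp_d c))%N) D c0
  = D c.
Proof.
move=> L0 RD.
have [d0 dL _ _] := cusp_props _ c.
have [c0 [e0 u0]] := canon_ex _ _ L0 d0 dL.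
rewrite (big_pred1 c0); first by apply: rat_const.
move=> c2 /=; apply/andP/eqP => [[/eqP a /eqP b]|->]; last by rewrite e0 u0 !eqxx.
by apply: cusp_inj; rewrite ?a ?b ?e0 ?u0.
Qed.

Lemma sum_fiber L (y : cdiv L) E (P : pred nat) (Y : int) :
  (0 < L)%N -> (0 < E)%N -> (E %| L)%N ->
  (forall c : cusp L, cusp_d c = E -> y c = Y) ->
  \sum_(c : cusp L | (cusp_d c == E) && P (cusp_u c)) y c
  = Y *+ count (fun u => coprime u (gN L E) && P u) (iota 0 (gN L E)).
Proof.
move=> L0 E0 EL hY.
rewrite -card_fiber // -sumrMnr.
by apply: eq_bigr => c /andP[/eqP e _]; rewrite hY.
Qed.

Lemma modl0 l (z : int) : prime l -> ((z%:~R : 'F_l) == 0) = (l %| `|z|)%N.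
Proof.
move=> lP; case: z => n.
  by rewrite /= (dvdn_pcharf (pchar_Fp lP)).
by rewrite NegzE mulrNz oppr_eq0 /= (dvdn_pcharf (pchar_Fp lP)).
Qed.

Lemma beta_valid M l (x : cusp (M * l)) : (0 < M)%N -> prime l ->
  exists c' : cusp M, cusp_d c' = beta_d l (cusp_d x) /\
                      cusp_u c' = beta_u M l (cusp_d x) (cusp_u x).
Proof.
move=> M0 lP; have l0 := prime_gt0 lP.
have [d0 dN ug cu] := cusp_props _ x.
case: (boolP (l %| cusp_d x)%N) => ld.
  rewrite bd_l // bu_l //.
  have dl : (cusp_d x = l * (cusp_d x %/ l))%N by rewrite [(l * _)%N]mulnC divnK.
  have e0 : (0 < cusp_d x %/ l)%N by rewrite divn_gt0 // dvdn_leq.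
  have eM : (cusp_d x %/ l %| M)%N.
    by move: dN; rewrite {1}dl mulnC dvdn_pmul2r.
  have gg : (gN M (cusp_d x %/ l) %| gN (M * l) (cusp_d x))%N.
    rewrite /gN.
    have -> : ((M * l) %/ cusp_d x = M %/ (cusp_d x %/ l))%N.
      by rewrite {1}dl NdivlD.
    rewrite dvdn_gcd dvdn_gcdr andbT.
    by rewrite (dvdn_trans (dvdn_gcdl _ _)) // {2}dl dvdn_mull.
  apply: cusp_ex => //; first by rewrite ltn_pmod // gN_gt0.
  by rewrite coprime_modl (coprime_dvdr gg).
rewrite bd_nl // bu_nl //.
have dM : (cusp_d x %| M)%N.
  by move: dN; rewrite Gauss_dvdl // coprime_sym prime_coprime.
apply: cusp_ex => //; first by rewrite ltn_pmod // gN_gt0.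
rewrite coprime_modl coprimeMl -(G1 M l _ lP dM ld) cu andbT.
by rewrite (coprime_dvdr (gN_dvd _ _)) // prime_coprime.
Qed.

Lemma push_deg M l (y : cdiv (M * l)) : (0 < M)%N -> prime l ->
  cdeg (degen_push M l y) = cdeg y.
Proof.
move=> M0 lP; rewrite /cdeg.
under eq_bigr => c' _ do rewrite ffunE big_mkcond.
rewrite exchange_big /=; apply: eq_bigr => x _.
have [c' [e1 e2]] := beta_valid M l x M0 lP.
rewrite (bigD1 c') //.
have -> : (beta_d l (cusp_d x) == cusp_d c') && (beta_u M l (cusp_d x) (cusp_u x) == cusp_u c') = true.
  by rewrite -e1 -e2 !eqxx.
rewrite big1; first exact: addr0.
move=> c2 ne.
case: ifP => // /andP[/eqP a /eqP b].
have ec : c2 = c' by apply: cusp_inj; [rewrite -a e1 | rewrite -b e2].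
by move: ne; rewrite ec eqxx.
Qed.
Theorem lemma3p4 (M l N : nat) (hM : (0 < M)%N) (hl : prime l) (hN : N = (M * l)%N) :
  exists (k : nat) (f : cdiv M -> 'rV['F_l]_k),
    [/\ (forall x y : cdiv M, Div0Q x -> Div0Q y -> f (x - y) = f x - f y),
        (forall v : 'rV['F_l]_k, exists2 x : cdiv M, Div0Q x & f x = v),
        (forall x : cdiv M, Div0Q x ->
           (f x = 0 <-> exists2 y : cdiv N, Div0Q y & x = degen_push M l y))
      & (~~ (l ^ 4 %| N)%N -> k = 0%N)].
Proof.
subst N.
have l0 := prime_gt0 hl; have l1 := prime_gt1 hl.
have L0 : (0 < M * l)%N by rewrite muln_gt0 hM l0.
pose bad d := (l %| d)%N && (l * gN M d %| M %/ d)%N.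
pose S := [set c : cusp M | bad (cusp_d c) && (cusp_u c == 1 %% gN M (cusp_d c))%N].
have [c1 [c1d c1u]] := canon_ex M 1 hM isT (dvd1n M).
have isc1 : forall c : cusp M, (c == c1) = (cusp_d c == 1%N).
  move=> c; apply/eqP/eqP => [->//|cd]; apply: cusp_inj; rewrite ?cd ?c1d //.
  have [_ _ ug _] := cusp_props _ c.
  have : (cusp_u c < 1)%N by move: ug; rewrite cd /gN gcd1n.
  by rewrite ltnS leqn0 => /eqP ->; rewrite c1u /gN gcd1n.
have Suniq : forall c c', c \in S -> c' \in S -> cusp_d c = cusp_d c' -> c = c'.
  move=> c c'; rewrite !inE => /andP[_ /eqP u1] /andP[_ /eqP u2] e.
  by apply: cusp_inj => //; rewrite u1 u2 e.
have Sd1 : forall c, c \in S -> (cusp_d c == 1%N) = false.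
  move=> c; rewrite inE => /andP[/andP[ld _] _]; apply/negbTE/eqP => e.
  by move: ld; rewrite e dvdn1 => /eqP e1; rewrite e1 in l1.
have sizeS : size (enum S) = #|S| by rewrite cardE.
pose f := fun x : cdiv M => \row_(i < #|S|) ((x (nth c1 (enum S) i))%:~R : 'F_l).
exists #|S|, f; split.
- move=> x y _ _; apply/rowP => i; rewrite !mxE !ffunE.
  exact: mulrzBr.
- move=> v.
  pose h (c : cusp M) := \sum_(i < #|S| | cusp_d (nth c1 (enum S) i) == cusp_d c)
                           ((nat_of_ord (v ord0 i))%:Z).
  pose x : cdiv M := [ffun c => h c - (if c == c1 then \sum_c' h c' else 0)].
  exists x.
    split.
      rewrite /cdeg; under eq_bigr do rewrite ffunE.
      by rewrite sumrB -big_mkcond big_pred1_eq subrr.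
    move=> k c c' _ e _; rewrite !ffunE !isc1 e.
    by rewrite /h e.
  apply/rowP => i; rewrite !mxE ffunE.
  have iS : (i < size (enum S))%N by rewrite sizeS.
  have nS : nth c1 (enum S) i \in S by rewrite -mem_enum mem_nth.
  rewrite isc1 Sd1 // subr0 /h (big_pred1 i).
    by rewrite -pmulrn natr_Zp.
  move=> j /=; apply/eqP/eqP => [e|->//].
  have jS : (j < size (enum S))%N by rewrite sizeS.
  have nS' : nth c1 (enum S) j \in S by rewrite -mem_enum mem_nth.
  have := Suniq _ _ nS' nS e => /eqP; rewrite nth_uniq ?enum_uniq // => /eqP ji.
  exact: val_inj.
- move=> x [x0 xr]; split.
  + move=> fx0.
    have hb : forall c : cusp M, bad (cusp_d c) -> (l %| `|x c|)%N.
      move=> c bc.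
      have [d0 dM _ _] := cusp_props _ c.
      have [c0 [e0 u0]] := canon_ex _ _ hM d0 dM.
      have c0S : c0 \in S by rewrite inE e0 u0 bc eqxx.
      have iS : (index c0 (enum S) < #|S|)%N by rewrite -sizeS index_mem mem_enum.
      have := congr1 (fun r : 'rV['F_l]_#|S| => r ord0 (Ordinal iS)) fx0.
      rewrite /= !mxE /= nth_index ?mem_enum // => /eqP.
      by rewrite modl0 // (rat_const _ _ hM xr c0 c) // e0.
    pose X d := \sum_(c0 : cusp M | (cusp_d c0 == d) && (cusp_u c0 == 1 %% gN M d)%N) x c0.
    have XvalM : forall c, X (cusp_d c) = x c by move=> c; exact: Xval.
    pose hy d := if ~~ (l %| d)%N then X d else
                 if (l %| d %/ l)%N then (if bad (d %/ l)%N then (X (d %/ l)%N %/ l)%Z else X (d %/ l)%N)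
                 else 0.
    pose y : cdiv (M * l) := [ffun c => hy (cusp_d c)].
    have py : degen_push M l y = x.
      apply/ffunP => c'; rewrite push_split //.
      set D := cusp_d c'.
      have [D0 DM _ cu'] := cusp_props _ c'.
      have lD0 : (0 < l * D)%N by rewrite muln_gt0 l0 D0.
      have lDN : (l * D %| M * l)%N by rewrite mulnC dvdn_pmul2r.
      case: (boolP (l %| D)%N) => lD.
      * rewrite add0r (sum_fiber _ y (l * D) (fun u => (u %% gN M D == cusp_u c')%N) (hy (l * D)%N)) //;
          last by move=> c e; rewrite ffunE e.
        rewrite /hy dvdn_mulr // mulKn // lD /=.
        have [_ _ ug _] := cusp_props _ c'.
        rewrite /gN NdivlD // -/(gN M D).
        case: ifP => bD.
        - case/andP: bD => _ bD.
          rewrite G2a // count_C3 //; last first.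
            have lg : (l %| gN M D)%N.
              by rewrite dvdn_gcd lD (dvdn_trans _ bD) // dvdn_mulr.
            move=> u; rewrite coprimeMr; apply/andP/idP => [[]//|cg]; split => //.
            exact: coprime_dvdr lg cg.
          by rewrite gN_gt0.
          rewrite -mulr_natr natz divzK; first exact: XvalM.
          by rewrite dvdzE /= XvalM hb // /bad lD bD.
        - rewrite G2b //; last by move: bD; rewrite /bad lD andTb => /negbT.
          have := count_C3 1 (gN M D) (cusp_u c') (gN_gt0 M D D0) ug cu'.
          rewrite mul1n => ->; last by [].
          by rewrite XvalM.
      * have [_ _ ug _] := cusp_props _ c'.
        rewrite (sum_fiber _ y D (fun u => (l * u %% gN M D == cusp_u c')%N) (X D)) //; first last.
        - by move=> c e; rewrite ffunE e /hy lD.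
        - by rewrite dvdn_mulr.
        rewrite big1 ?addr0; last first.
          move=> c /andP[/eqP e _]; rewrite ffunE e /hy dvdn_mulr // mulKn //.
          by rewrite (negbTE lD).
        rewrite G1 // count_C1 ?XvalM //; first exact: gN_gt0.
        by rewrite (coprime_dvdr (gN_dvd _ _)) // prime_coprime.
    exists y; last by rewrite py.
    split; first by rewrite -push_deg // py x0.
    by move=> k c c' _ e _; rewrite !ffunE e.
  + case=> y [y0 yr] ->; apply/rowP => i; rewrite !mxE.
    have iS : (i < size (enum S))%N by rewrite sizeS.
    have nS : nth c1 (enum S) i \in S by rewrite -mem_enum mem_nth.
    set c := nth c1 (enum S) i in nS *.
    move: (nS); rewrite inE => /andP[/andP[lD bD] /eqP cu].
    have [D0 DM ug cu'] := cusp_props _ c.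
    have lD0 : (0 < l * cusp_d c)%N by rewrite muln_gt0 l0 D0.
    have lDN : (l * cusp_d c %| M * l)%N by rewrite mulnC dvdn_pmul2r.
    have [cN [eN _]] := canon_ex _ _ L0 lD0 lDN.
    rewrite push_split // lD add0r.
    rewrite (sum_fiber _ y (l * cusp_d c) (fun u => (u %% gN M (cusp_d c) == cusp_u c)%N) (y cN)) //;
      last by move=> c2 e; apply: (rat_const _ _ L0 yr); rewrite e eN.
    rewrite /gN NdivlD // -/(gN M (cusp_d c)) G2a // count_C3 //.
    + by apply/eqP; rewrite modl0 // -mulr_natr abszM natz dvdn_mull.
    + by rewrite gcdn_gt0 D0.
    + have lg : (l %| gN M (cusp_d c))%N.
        by rewrite dvdn_gcd lD (dvdn_trans _ bD) // dvdn_mulr.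
      move=> u; rewrite coprimeMr; apply/andP/idP => [[]//|cg]; split => //.
      exact: coprime_dvdr lg cg.
- move=> nd; apply/eqP; rewrite cards_eq0; apply/eqP/setP => c.
  rewrite inE in_set0; apply/negP => /andP[/andP[ld hg] _]; apply: (negP nd).
  have [_ dM _ _] := cusp_props _ c.
  have lg : (l %| gN M (cusp_d c))%N.
    by rewrite dvdn_gcd ld (dvdn_trans _ hg) // dvdn_mulr.
  have ll : (l * l %| M %/ cusp_d c)%N.
    by rewrite (dvdn_trans _ hg) // dvdn_pmul2l.
  have : (l * (l * l) %| cusp_d c * (M %/ cusp_d c))%N by rewrite dvdn_mul.
  rewrite [(cusp_d c * _)%N]mulnC divnK // => h3.
  have -> : (l ^ 4 = l * (l * l) * l)%N by rewrite !expnS expn0 muln1 !mulnA.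
  by rewrite dvdn_pmul2r.
Qed.
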